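(* Let $p \in (0,\frac{1}{2})$, let $S=\{1,\dots,n\}$ and let $x,y \in S$ with $x<y$. Let $A$ be any (possibly randomized) algorithm. On a random instance, the probability that $A$ returns a permutation in which $x$ and $y$ appear in the wrong relative order is at least $\frac{1}{2}\left(\frac{p}{1-p}\right)^{2(y-x)-1}$.
   Context: A random instance consists of an input permutation of $S$ chosen uniformly at random together with comparison outcomes: for each pair $i<j$ independently, the comparison reports the wrong order with probability exactly $p$ and the correct order otherwise; outcomes are persistent (repeated comparisons of the same pair always return the same outcome). The algorithm accesses elements only via these comparisons and outputs a permutation of $S$. *)

(* Defs.v *)
From mathcomp Require Import all_boot all_order all_algebra all_fingroup.
Set Implicit Arguments. Unset Strict Implicit. Unset Printing Implicit Defensive.
Import Order.TTheory GRing.Theory Num.Theory.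
Local Open Scope ring_scope.

(* Elements of S = {1..n} are represented by 'I_n = {0..n-1} (shift by 1);
   the true order is the order of the ordinals. *)

(* Comparison errors: e (a,b) for a < b says the comparison of elements a and b
   reports the wrong order.  Only entries with a < b are meaningful; the others
   are required to be false, so that summing over valid e sums over the
   independent choices for each pair a < b. *)
Definition errvec (n : nat) := {ffun 'I_n * 'I_n -> bool}.

Definition valid_err (n : nat) (e : errvec n) : bool :=
  [forall a : 'I_n, forall b : 'I_n, ~~ (a < b)%N ==> ~~ e (a, b)].

Definition err_weight (R : numDomainType) (n : nat) (p : R) (e : errvec n) : R :=
  \prod_(ab : 'I_n * 'I_n | (ab.1 < ab.2)%N) (if e ab then p else 1 - p).

(* Comparison outcomes as seen by the algorithm, on input positions.
   The input permutation pi puts element pi i at position i.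
   observed pi e (i,j) = "the comparison says the element at position i is
   smaller than the element at position j". Outcomes are persistent. *)
Definition observed (n : nat) (pi : {perm 'I_n}) (e : errvec n)
  : {ffun 'I_n * 'I_n -> bool} :=
  [ffun ij : 'I_n * 'I_n =>
     let a := pi ij.1 in let b := pi ij.2 in
     if (a < b)%N then ~~ e (a, b)
     else if (b < a)%N then e (b, a) else false].

(* A (possibly randomized) algorithm: since it accesses elements only through
   comparisons and there is no restriction on the number of queries, it is
   exactly a map from the comparison table (on positions) to a probability
   distribution over outputs.  An output s : {perm 'I_n} is an ordering of the
   input positions: s k is the position of the element ranked k-th. *)
Definition algorithm (R : numDomainType) (n : nat) :=
  {ffun {ffun 'I_n * 'I_n -> bool} -> {ffun {perm 'I_n} -> R}}.

Definition is_random_alg (R : numDomainType) (n : nat) (A : algorithm R n) : Prop :=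
  forall t, (forall s, 0 <= A t s) /\ \sum_(s : {perm 'I_n}) A t s = 1.

(* Output s puts elements x and y in the wrong relative order (y before x),
   where the rank of element z is s^-1 (pi^-1 z). *)
Definition wrong_order (n : nat) (pi s : {perm 'I_n}) (x y : 'I_n) : bool :=
  ((s^-1)%g ((pi^-1)%g y) < (s^-1)%g ((pi^-1)%g x))%N.

Definition err_prob (R : numDomainType) (n : nat) (p : R) (A : algorithm R n)
  (x y : 'I_n) : R :=
  \sum_(pi : {perm 'I_n}) \sum_(e : errvec n | valid_err e) \sum_(s : {perm 'I_n})
     (n`!%:R)^-1 * err_weight p e * A (observed pi e) s * (wrong_order pi s x y)%:R.

(* Main.v *)
Require Import Defs.
From mathcomp Require Import all_boot all_order all_algebra all_fingroup.
From mathcomp Require Import zify lra ring.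
Set Implicit Arguments. Unset Strict Implicit. Unset Printing Implicit Defensive.
Import Order.TTheory GRing.Theory Num.Theory.
Local Open Scope ring_scope.

Definition phi n (x y : 'I_n) (e : errvec n) : errvec n :=
 [ffun cd : 'I_n * 'I_n => (cd.1 < cd.2)%N &&
    (if (tperm x y cd.1 < tperm x y cd.2)%N then e (tperm x y cd.1, tperm x y cd.2)
     else ~~ e (tperm x y cd.2, tperm x y cd.1))].

Lemma phi_valid n (x y : 'I_n) e : valid_err (phi x y e).
Proof.
apply/forallP => a; apply/forallP => b; apply/implyP => h.
by rewrite ffunE /= (negbTE h).
Qed.

Lemma tp_neq n (x y : 'I_n) (c d : 'I_n) : c != d -> (tperm x y c : nat) != tperm x y d.
Proof. by apply: contra => /eqP/val_inj/perm_inj ->. Qed.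

Lemma phiK n (x y : 'I_n) e : valid_err e -> phi x y (phi x y e) = e.
Proof.
move=> /forallP ve; apply/ffunP => -[c d]; rewrite !ffunE /= !tpermK.
case: (ltnP c d) => cd /=; last first.
  by have /forallP/(_ d)/implyP := ve c; rewrite -leqNgt cd => /(_ isT) /negbTE.
have hn : c != d by rewrite neq_ltn cd.
have := tp_neq x y hn.
case: (ltngtP (tperm x y c) (tperm x y d)) => //= h _.
by rewrite ltnNge (ltnW cd) /= negbK.
Qed.

Lemma obs_phi n (x y : 'I_n) pi e :
  observed (pi * tperm x y)%g (phi x y e) = observed pi e.
Proof.
apply/ffunP => -[i j]; rewrite !ffunE /= !permM !ffunE /= !tpermK.
set a := pi i; set b := pi j.
case: (ltngtP a b) => ab; last by move/val_inj: ab => ->; rewrite ltnn.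
all: have hab : a != b by rewrite neq_ltn ab ?orbT.
all: have := tp_neq x y hab.
all: case: (ltngtP (tperm x y a) (tperm x y b)) => //= h _.
all: by rewrite ?ab ?negbK.
Qed.

Lemma wrong_swap n (x y : 'I_n) pi s : x != y ->
  wrong_order (pi * tperm x y) s x y = ~~ wrong_order pi s x y.
Proof.
move=> xy; rewrite /wrong_order invgM tpermV !permM tpermR tpermL.
rewrite ltnNge leq_eqVlt; congr (~~ _).
rewrite (_ : (_ == _) = false) //; apply/negbTE; rewrite ?val_eqE (inj_eq perm_inj) (inj_eq perm_inj) eq_sym //.
Qed.

Definition sg n (x y : 'I_n) (cd : 'I_n * 'I_n) : 'I_n * 'I_n :=
  if (tperm x y cd.1 < tperm x y cd.2)%N == (cd.1 < cd.2)%N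
  then (tperm x y cd.1, tperm x y cd.2) else (tperm x y cd.2, tperm x y cd.1).

Lemma sgK n (x y : 'I_n) : involutive (sg x y).
Proof.
move=> [c d]; rewrite /sg /=.
case: (c =P d) => [<-|cd]; first by rewrite !ltnn !eqxx /= !tpermK ?ltnn ?eqxx.
have hcd : (c : nat) != d by apply/eqP => /val_inj.
have := tp_neq x y (introN eqP cd).
case: (ltngtP c d) hcd => // h1 _; case: (ltngtP (tperm x y c) (tperm x y d)) => //= h2 _.
all: rewrite ?h2 ?tpermK ?h1 ?eqxx //=.
all: rewrite ?h1 ?h2 //; by rewrite !ltnNge ?(ltnW h1) ?(ltnW h2).
Qed.

Lemma flip_count n (x y : 'I_n) : (x < y)%N ->
  (\sum_(cd : 'I_n * 'I_n | (cd.1 < cd.2)%N) ~~ (tperm x y cd.1 < tperm x y cd.2)%N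
   <= 2 * (y - x) - 1)%N.
Proof.
move=> xy.
set F := [set cd : 'I_n * 'I_n | (cd.1 < cd.2)%N && ~~ (tperm x y cd.1 < tperm x y cd.2)%N].
have -> : (\sum_(cd : 'I_n * 'I_n | (cd.1 < cd.2)%N) ~~ (tperm x y cd.1 < tperm x y cd.2)%N
   = \sum_(cd in F) 1)%N.
  rewrite big_mkcond [RHS]big_mkcond; apply: eq_bigr => cd _; rewrite inE.
  by case: (_ < _)%N; case: (~~ _).
rewrite sum1_card.
pose H1 (k : 'I_(y - x)) := (insubd x (x + k)%N, y).
pose H2 (k : 'I_(y - x - 1)) := (x, insubd x (x + k.+1)%N).
have sub : F \subset [set H1 k | k : 'I_(y - x)] :|: [set H2 k | k : 'I_(y - x - 1)].
  apply/subsetP => -[c d]; rewrite inE /= => /andP[cd].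
  have hc := ltn_ord c; have hd := ltn_ord d; have hy := ltn_ord y.
  have hx := ltn_ord x.
  move: cd hc hd; case: tpermP => [->|->|hcx hcy]; case: tpermP => [->|->|hdx hdy] //=; rewrite -?leqNgt => cd hc hd h.
  all: try lia.
  - rewrite inE; apply/orP; left; apply/imsetP.
    have k0 : (0 < y - x)%N by lia.
    exists (Ordinal k0) => //; rewrite /H1 /=; congr pair; apply/val_inj.
    by rewrite /= insubdK ?addn0 // inE.
  - rewrite inE; apply/orP; right; apply/imsetP.
    have hdy' : (d : nat) <> y by move=> /val_inj.
    have k0 : (d - x - 1 < y - x - 1)%N by lia.
    exists (Ordinal k0) => //; rewrite /H2 /=; congr pair; apply/val_inj.
    rewrite /= insubdK //=; [lia | lia].
  - rewrite inE; apply/orP; left; apply/imsetP.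
    have hcx' : (c : nat) <> x by move=> /val_inj.
    have k0 : (c - x < y - x)%N by lia.
    exists (Ordinal k0) => //; rewrite /H1 /=; congr pair; apply/val_inj.
    rewrite /= insubdK //=; [lia | lia].
apply: (leq_trans (subset_leq_card sub)).
rewrite cardsU; apply: (leq_trans (leq_subr _ _)).
apply: leq_trans (leq_add (leq_imset_card _ _) (leq_imset_card _ _)) _.
rewrite !card_ord; lia.
Qed.

Lemma sg_lt n (x y : 'I_n) cd : ((sg x y cd).1 < (sg x y cd).2)%N = (cd.1 < cd.2)%N.
Proof.
case: cd => c d; rewrite /sg /=.
case: (c =P d) => [<-|cd]; first by case: ifP; rewrite /= !ltnn.
have hcd : (c : nat) != d by apply/eqP => /val_inj.
have := tp_neq x y (introN eqP cd).
case: (ltngtP c d) hcd => // h1 _; case: (ltngtP (tperm x y c) (tperm x y d)) => //= h2 _.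
all: by rewrite ?h1 ?h2 /= ltnNge ltnW.
Qed.

Lemma phi_sg n (x y : 'I_n) e (c d : 'I_n) : (c < d)%N ->
  phi x y e (c, d) = e (sg x y (c, d)) (+) ~~ (tperm x y c < tperm x y d)%N.
Proof.
move=> cd; rewrite ffunE /sg /= cd.
have hcd : c != d by rewrite neq_ltn cd.
have := tp_neq x y hcd.
by case: (ltngtP (tperm x y c) (tperm x y d)) => //= h2 _; rewrite ?addbF ?addbT.
Qed.

Lemma weight_phi (R : realFieldType) n (p : R) (x y : 'I_n) e :
  0 < p -> p < 1 / 2 -> (x < y)%N ->
  (p / (1 - p)) ^+ (2 * (y - x) - 1) * err_weight p e <= err_weight p (phi x y e).
Proof.
move=> p0 p2 xy.
set r := p / (1 - p).
have q0 : 0 < 1 - p by lra.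
have r0 : 0 <= r by rewrite /r divr_ge0 // ltW.
have r1 : r <= 1 by rewrite /r ler_pdivrMr // mul1r; lra.
have rp : r * (1 - p) = p by rewrite /r mulfVK // gt_eqF.
have f0 : forall b : bool, 0 <= (if b then p else 1 - p) by case; lra.
have W0 : 0 <= err_weight p e by apply: prodr_ge0 => i _.
have -> : err_weight p e = \prod_(cd : 'I_n * 'I_n | (cd.1 < cd.2)%N)
     (if e (sg x y cd) then p else 1 - p).
  rewrite /err_weight (reindex_inj (can_inj (sgK x y))) /=.
  by apply: eq_bigl => cd; rewrite sg_lt.
set N := (\sum_(cd : 'I_n * 'I_n | (cd.1 < cd.2)%N) ~~ (tperm x y cd.1 < tperm x y cd.2)%N)%N.
apply: (@le_trans _ _ (r ^+ N * \prod_(cd : 'I_n * 'I_n | (cd.1 < cd.2)%N)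
     (if e (sg x y cd) then p else 1 - p))).
  apply: ler_wpM2r; first by apply: prodr_ge0.
  by apply: ler_wiXn2l => //; apply: flip_count.
rewrite /N -prodrXr -big_split /=.
apply: ler_prod => -[c d] /= cd; rewrite phi_sg //.
case: (~~ _); rewrite /= ?expr1 ?expr0 ?mul1r ?addbT ?addbF; last by rewrite f0 lexx.
case: (e _) => /=; apply/andP; split.
- by rewrite mulr_ge0 // ltW.
- apply: (@le_trans _ _ p); last lra.
  by rewrite ler_piMl // ltW.
- by rewrite mulr_ge0 // ltW.
- by rewrite rp.
Qed.

Lemma mass (R : realFieldType) n (p : R) :
  \sum_(e : errvec n | valid_err e) err_weight p e = 1.
Proof.
pose F (i : 'I_n * 'I_n) (b : bool) : R :=
  if (i.1 < i.2)%N then (if b then p else 1 - p) else (if b then 0 else 1).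
have H1 : \prod_(i : 'I_n * 'I_n) \sum_(b : bool) F i b = 1.
  by apply: big1 => i _; rewrite big_bool /F; case: ifP => _ /=; lra.
rewrite -[RHS]H1 bigA_distr_bigA /= [LHS]big_mkcond /=.
apply: eq_bigr => e _; case: ifP => ve; apply/esym.
- rewrite /err_weight [RHS]big_mkcond /=; apply: eq_bigr => i _; rewrite /F.
  case: ifP => // hi.
  have := forallP ve i.1 => /forallP /(_ i.2) /implyP; rewrite hi => /(_ isT).
  by case: i hi => a b /= _ /negbTE ->.
- move/negbT: ve => /forallPn [a] /forallPn [b]; rewrite negb_imply negbK => /andP [hab eab].
  rewrite (bigD1 (a, b)) //= /F /= (negbTE hab) eab mul0r //.
Qed.

Theorem lemma6p1 (R : realFieldType) (n : nat) (p : R) (x y : 'I_n)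
  (A : algorithm R n) :
  0 < p -> p < 1 / 2 -> (x < y)%N -> is_random_alg A ->
  1 / 2 * (p / (1 - p)) ^+ (2 * (y - x) - 1) <= err_prob p A x y.
Proof.
move=> p0 p2 xy hA.
have xny : x != y by rewrite neq_ltn xy.
set q := (p / (1 - p)) ^+ (2 * (y - x) - 1).
have q0 : 0 <= q by rewrite exprn_ge0 // divr_ge0 // ?ltW //; lra.
have q1 : q <= 1.
  rewrite exprn_ile1 // ?divr_ge0 ?ltW //; try lra.
  rewrite ltr_pdivrMr; lra.
set c : R := (n`!%:R)^-1.
have c0 : 0 <= c by rewrite invr_ge0 ler0n.
pose G pi e := \sum_(s : {perm 'I_n}) A (observed pi e) s * (wrong_order pi s x y)%:R.
have G1 : forall pi e, G pi e <= 1.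
  move=> pi e; have [hA0 hA1] := hA (observed pi e); rewrite -hA1 /G.
  apply: ler_sum => s _; rewrite -[leRHS]mulr1; apply: ler_wpM2l => //.
  by case: (wrong_order _ _ _ _).
have Gs : forall pi e, G (pi * tperm x y)%g (phi x y e) = 1 - G pi e.
  move=> pi e; have [hA0 hA1] := hA (observed pi e); rewrite -hA1 /G obs_phi -sumrB.
  apply: eq_bigr => s _; rewrite wrong_swap //.
  by case: (wrong_order _ _ _ _); rewrite /= ?mulr1 ?mulr0 ?subrr ?subr0.
have T1 : \sum_(pi : {perm 'I_n}) \sum_(e : errvec n | valid_err e) c * err_weight p e = 1.
  under eq_bigr do rewrite -mulr_sumr mass mulr1.
  rewrite sumr_const card_Sn -mulr_natr mulVf // pnatr_eq0 -lt0n fact_gt0 //.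
have EP : err_prob p A x y =
    \sum_(pi : {perm 'I_n}) \sum_(e : errvec n | valid_err e) c * err_weight p e * G pi e.
  apply: eq_bigr => pi _; apply: eq_bigr => e _; rewrite /G mulr_sumr.
  by apply: eq_bigr => s _; rewrite !mulrA.

have key : q * (1 - err_prob p A x y) <= err_prob p A x y.
  rewrite {2}EP (reindex_inj (mulIg (tperm x y))) /=.
  apply: (@le_trans _ _ (\sum_(pi : {perm 'I_n}) \sum_(e : errvec n | valid_err e)
      c * err_weight p (phi x y e) * G (pi * tperm x y)%g (phi x y e))); last first.
    rewrite le_eqVlt; apply/orP; left; apply/eqP; apply: eq_bigr => pi _.
    rewrite [RHS](reindex_onto (phi x y) (phi x y)); last by move=> e ve; rewrite phiK.
    apply: eq_bigl => e; rewrite phi_valid /=.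
    apply/idP/eqP => [ve|<-]; [by rewrite phiK | exact: phi_valid].
  rewrite -[X in q * (X - _)]T1 EP -sumrB mulr_sumr; apply: ler_sum => pi _.
  rewrite -sumrB mulr_sumr; apply: ler_sum => e ve.
  rewrite Gs.
  apply: (@le_trans _ _ (c * (q * err_weight p e) * (1 - G pi e))).
    by rewrite le_eqVlt; apply/orP; left; apply/eqP; ring.
  apply: ler_wpM2r; first by rewrite subr_ge0.
  apply: ler_wpM2l => //.
  by apply: weight_phi.
case: (lerP 0 (err_prob p A x y)) => hP; nra.
Qed.
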